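(* Let $S$ be a finite non-empty set and $\Sigma\subseteq\mathbb{R}_+\times S$ locally finite, and let $(X_n,\eta_n)$ be a time-homogeneous irreducible Markov chain on $\Sigma$ such that every line $\Lambda_k=\{x:(x,k)\in\Sigma\}$ is unbounded. Suppose that for some $p>2$ there is $C_p<\infty$ with $\mathbb{E}_{x,i}[|X_{n+1}-X_n|^p]\le C_p$ for all $(x,i)\in\Sigma$; that $q_{ij}(x)\to q_{ij}$ as $x\to\infty$ with $(q_{ij})$ an irreducible stochastic matrix; and that there exist $c_i\in\mathbb{R}$, $s_i^2\ge0$ (at least one $s_i^2\ne0$) with $\mu_i(x)=c_i/x+o(x^{-1})$ and $\sigma_i^2(x)=s_i^2+o(1)$ as $x\to\infty$. Let $b_i\in\mathbb{R}$, $i\in S$, let $\nu\in(0,p]$, let $f_\nu$ be as in the context, and set $Z_n:=(f_\nu(X_n,\eta_n))^{1/\nu}$. Then, as $x\to\infty$, \[\mathbb{E}_{x,i}[Z_{n+1}-Z_n]=\frac{c_i}x+\frac1{2x}\sum_{j\in S}(b_j-b_i)q_{ij}+o(x^{-1}),\] and there is a constant $B<\infty$ such that $\mathbb{E}_{x,i}[(Z_{n+1}-Z_n)^2]\le B$.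
   Context: Locally finite means $\Sigma\cap([0,r]\times S)$ is finite for every $r\ge0$. $\mathbb{E}_{x,i}[\cdot]=\mathbb{E}[\cdot\mid X_n=x,\eta_n=i]$; $q_{ij}(x)=\Pr[\eta_{n+1}=j\mid X_n=x,\eta_n=i]$; $\mu_i(x)=\mathbb{E}_{x,i}[X_{n+1}-X_n]$; $\sigma_i^2(x)=\mathbb{E}_{x,i}[(X_{n+1}-X_n)^2]$. $x_0:=1+\sqrt{|\nu|\max_i|b_i|}$ and $f_\nu(x,i)=x^\nu+\frac\nu2b_ix^{\nu-2}$ for $x\ge x_0$, $f_\nu(x,i)=x_0^\nu+\frac\nu2b_ix_0^{\nu-2}$ for $x<x_0$ (this is positive). *)

(* Defs.v *)
From HB Require Import structures.
From mathcomp Require Import all_boot all_order all_algebra.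
From mathcomp Require Import all_classical all_reals all_analysis.
From Stdlib Require Import Relations.
Set Implicit Arguments. Unset Strict Implicit. Unset Printing Implicit Defensive.
Import Order.TTheory GRing.Theory Num.Theory.
Local Open Scope classical_set_scope.
Local Open Scope ring_scope.

Section Defs.
Context {R : realType} {S : finType}.

(* A (time-homogeneous) Markov chain on Sigma is given by its one-step
   transition probabilities P z w = Pr[(X_{n+1},eta_{n+1}) = w | (X_n,eta_n) = z]. *)
Definition markov_kernel (Sigma : set (R * S)) (P : R * S -> R * S -> R) : Prop :=
  (forall z w, 0 <= P z w) /\
  (forall z w, Sigma z -> ~ Sigma w -> P z w = 0) /\
  (forall z, Sigma z -> (\esum_(w in Sigma) (P z w)%:E = 1)%E).

Definition irreducible_chain (Sigma : set (R * S)) (P : R * S -> R * S -> R) : Prop :=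
  forall z w, Sigma z -> Sigma w ->
    clos_refl_trans _
      (fun a b => Sigma a /\ Sigma b /\ 0 < P a b) z w.

Definition locally_finite (Sigma : set (R * S)) : Prop :=
  forall r : R, 0 <= r -> finite_set (Sigma `&` [set z | z.1 <= r]).

Definition Ex (Sigma : set (R * S)) (P : R * S -> R * S -> R) (z : R * S)
    (g : R * S -> R) : \bar R :=
  (\esum_(w in Sigma) (P z w * Num.max (g w) 0)%:E
   - \esum_(w in Sigma) (P z w * Num.max (- g w) 0)%:E)%E.

Definition qx (Sigma : set (R * S)) (P : R * S -> R * S -> R) (z : R * S) (j : S)
  : \bar R := \esum_(w in Sigma `&` [set w | w.2 = j]) (P z w)%:E.

Definition irreducible_stochastic (Q : S -> S -> R) : Prop :=
  (forall i j, 0 <= Q i j) /\ (forall i, \sum_(j : S) Q i j = 1) /\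
  (forall i j, connect (fun a b => 0 < Q a b) i j).

Definition x0 (nu : R) (b : S -> R) : R :=
  1 + Num.sqrt (`|nu| * \big[Num.max/0]_(i : S) `|b i|).

Definition f_nu (nu : R) (b : S -> R) (z : R * S) : R :=
  let x := Num.max z.1 (x0 nu b) in
  powR x nu + nu / 2 * b z.2 * powR x (nu - 2).

Definition Zfun (nu : R) (b : S -> R) (z : R * S) : R :=
  powR (f_nu nu b z) (nu^-1).

End Defs.

(* Main.v *)
Require Import Defs.
From HB Require Import structures.
From mathcomp Require Import all_boot all_order all_algebra.
From mathcomp Require Import all_classical all_reals all_analysis.
From mathcomp Require Import ring lra.
Import Order.TTheory GRing.Theory Num.Theory.
Local Open Scope classical_set_scope.
Local Open Scope ring_scope.

Section AL.
Context {R : realType}.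

Lemma ln1D_lb (u : R) : `|u| <= 2^-1 -> u - 2 * u ^+ 2 <= ln (1 + u).
Proof.
move=> hu.
have hu' : -2^-1 <= u <= 2^-1 by rewrite -ler_norml.
case/andP: hu' => hu1 hu2.
have pos : 0 < 1 + u by lra.
set v := (1 + u)^-1.
have hv : v * (1 + u) = 1 by rewrite mulVf // gt_eqF.
have vpos : 0 < v by rewrite invr_gt0.
have vle2 : v <= 2.
  have : v * (1 + u) <= 2 * (1 + u) by rewrite hv; lra.
  by rewrite ler_pM2r.
have h1 : ln v <= v - 1.
  have := @le_ln1Dx R (v - 1). have e : 1 + (v - 1) = v by ring. rewrite e. apply. lra.
have h2 : ln v = - ln (1 + u) by rewrite /v lnV // posrE.
have h3 : 1 - v = u * v by nra.
have h4 : u * v - (u - 2 * u ^+ 2) = u ^+ 2 * (2 - v) by nra.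
have : 0 <= u ^+ 2 * (2 - v) by apply: mulr_ge0; [exact: sqr_ge0| lra].
nra.
Qed.

Lemma expR_ub (t : R) : t <= 2^-1 -> expR t <= 1 + t + 2 * t ^+ 2.
Proof.
move=> ht.
have E0 := expR_gt0 t.
have h1 : 1 - t <= expR (- t) by have := expR_ge1Dx (- t).
have h2 : expR t * expR (- t) = 1 by rewrite -expRD subrr expR0.
have h3 : expR t * (1 - t) <= 1.
  have : expR t * (1 - t) <= expR t * expR (- t) by rewrite ler_pM2l.
  by rewrite h2.
have h4 : 0 <= t ^+ 2 * (1 - 2 * t) by apply: mulr_ge0; [exact: sqr_ge0| lra].
have h5 : (1 - t) * (1 + t + 2 * t ^+ 2) = 1 + t ^+ 2 * (1 - 2 * t) by ring.
have h6 : 0 < 1 + t + 2 * t ^+ 2 by nra.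
nra.
Qed.

Lemma taylor_pow (a u : R) : 0 < a -> `|u| <= 2^-1 -> 2 * a * `|u| <= 2^-1 ->
  `|expR (a * ln (1 + u)) - 1 - a * u| <= (8 * a ^+ 2 + 2 * a) * u ^+ 2.
Proof.
move=> a0 hu hau.
have hu' : -2^-1 <= u <= 2^-1 by rewrite -ler_norml.
case/andP: hu' => hu1 hu2.
have l1 : ln (1 + u) <= u by apply: le_ln1Dx; lra.
have l2 := ln1D_lb u hu.
set t := a * ln (1 + u).
have au : `|u| ^+ 2 = u ^+ 2 by rewrite real_normK // num_real.
have uu : u ^+ 2 <= `|u| * 2^-1 by rewrite -au expr2 ler_wpM2l.
have t1 : t <= a * u by rewrite /t ler_pM2l.
have t2 : a * u - 2 * a * u ^+ 2 <= t.
  rewrite /t. have -> : a * u - 2 * a * u ^+ 2 = a * (u - 2 * u ^+ 2) by ring.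
  by rewrite ler_pM2l.
have aun : - `|u| <= u <= `|u| by rewrite -ler_norml.
case/andP: aun => aun1 aun2.
have au1 : a * u <= a * `|u| by rewrite ler_pM2l.
have au2 : - (a * `|u|) <= a * u by rewrite -mulrN ler_pM2l.
have au3 : 2 * a * u ^+ 2 <= a * `|u| by nra.
have tb1 : t <= 2 * a * `|u| by lra.
have tb2 : - (2 * a * `|u|) <= t by lra.
have tsq : t ^+ 2 <= 4 * a ^+ 2 * u ^+ 2.
  have : `|t| <= 2 * a * `|u| by rewrite ler_norml; lra.
  move=> h. have h0 : 0 <= `|t| by [].
  have : `|t| ^+ 2 <= (2 * a * `|u|) ^+ 2 by rewrite ler_sqr // nnegrE; nra.
  rewrite real_normK ?num_real //. move=> h'. apply: (le_trans h').
  rewrite !exprMn au. lra.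
have e1 := expR_ge1Dx t.
have e2 : expR t <= 1 + t + 2 * t ^+ 2 by apply: expR_ub; lra.
rewrite ler_norml; apply/andP; split; nra.
Qed.
End AL.


Section Zlem.
Context {R : realType} {S : finType}.
Variables (nu : R) (b : S -> R).
Hypothesis nu0 : 0 < nu.

Let Bm : R := \big[Num.max/0]_(i : S) `|b i|.
Let X0 : R := x0 nu b.

Lemma Bm_ge j : `|b j| <= Bm.
Proof. by apply/bigmax_geP; right; exists j. Qed.

Lemma Bm_ge0 : 0 <= Bm.
Proof. by apply/bigmax_geP; left. Qed.

Lemma X0_ge1 : 1 <= X0.
Proof. rewrite /X0 /x0 lerDl; exact: sqrtr_ge0. Qed.

Lemma X0_sq : nu * Bm <= X0 ^+ 2.
Proof.
have h : 0 <= nu * Bm by apply: mulr_ge0; [exact: ltW | exact: Bm_ge0].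
rewrite /X0 /x0 -/Bm gtr0_norm //.
have s0 := sqrtr_ge0 (nu * Bm).
have s2 := sqr_sqrtr h.
nra.
Qed.


Lemma M_ge y : X0 <= Num.max y X0.
Proof. by rewrite le_max lexx orbT. Qed.

Lemma u_bound (M : R) j : X0 <= M -> `|nu / 2 * b j * M^-1 ^+ 2| <= 2^-1.
Proof.
move=> hM.
have M1 : 1 <= M := le_trans X0_ge1 hM.
have M0 : 0 < M by lra.
set W := M^-1.
have MW : M * W = 1 by rewrite mulfV // gt_eqF.
have W0 : 0 < W by rewrite invr_gt0.
have hb := Bm_ge j.
have hx := X0_sq.
have X1 := X0_ge1.
have hMM : X0 ^+ 2 <= M ^+ 2 by rewrite ler_sqr // nnegrE; lra.
have e : `|nu / 2 * b j * W ^+ 2| = nu / 2 * `|b j| * W ^+ 2.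
  rewrite !normrM (gtr0_norm W0) (gtr0_norm nu0) (gtr0_norm (_ : 0 < 2^-1)) ?expr2 //.
have nb : nu * `|b j| <= M ^+ 2.
  apply: le_trans hMM; apply: le_trans hx; rewrite ler_pM2l //.
rewrite e.
have : nu * `|b j| * W ^+ 2 <= M ^+ 2 * W ^+ 2 by rewrite ler_pM2r // exprn_gt0.
rewrite -exprMn MW expr1n.
lra.
Qed.

Lemma Zform y j : let M := Num.max y X0 in
  Zfun nu b (y, j) = M * expR (nu^-1 * ln (1 + nu / 2 * b j * M^-1 ^+ 2)).
Proof.
move=> M.
have hM : X0 <= M := M_ge y.
have M1 : 1 <= M := le_trans X0_ge1 hM.
have M0 : 0 < M by lra.
set u := nu / 2 * b j * M^-1 ^+ 2.
have hu := @u_bound M j hM.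
have hu' : -2^-1 <= u <= 2^-1 by rewrite -ler_norml.
have pu : 0 < 1 + u by lra.
have f_eq : f_nu nu b (y, j) = powR M nu * (1 + u).
  rewrite /f_nu /= -/X0 -/M.
  rewrite powRB; last by apply/implyP => _; rewrite gt_eqF.
  rewrite (powR_mulrn 2 (ltW M0)) /u exprVn. ring.
rewrite /Zfun f_eq powRM ?powR_ge0 ?ltW //.
rewrite -powRrM mulfV ?gt_eqF // powRr1 ?ltW //.
by rewrite /powR gt_eqF.
Qed.


Let a : R := nu^-1.
Definition K4 : R := (8 * a ^+ 2 + 2 * a) * (nu / 2) ^+ 2 * Bm ^+ 2.
Definition T0 : R := X0 + 2 * Bm.

Lemma T0_ge : X0 <= T0 /\ 1 <= T0 /\ 2 * Bm <= T0 ^+ 2.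
Proof.
have X1 := X0_ge1. have B0 := Bm_ge0.
rewrite /T0; split; first lra. split; first lra. nra.
Qed.

Lemma K4_ge0 : 0 <= K4.
Proof.
have a0 : 0 < a by rewrite /a invr_gt0.
rewrite /K4; apply: mulr_ge0; last exact: sqr_ge0.
apply: mulr_ge0; last exact: sqr_ge0. nra.
Qed.

Lemma Zfar y j : T0 <= y ->
  `|Zfun nu b (y, j) - y - b j / 2 * y^-1| <= K4 * y^-1 ^+ 3.
Proof.
move=> hy.
have [hT1 [hT2 hT3]] := T0_ge.
have hM : Num.max y X0 = y by apply/max_idPl; lra.
rewrite Zform /= hM.
have y0 : 0 < y by lra.
set W := y^-1.
have yW : y * W = 1 by rewrite mulfV // gt_eqF.
have W0 : 0 < W by rewrite invr_gt0.
have a0 : 0 < a by rewrite /a invr_gt0.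
have anu : a * nu = 1 by rewrite /a mulVf // gt_eqF.
set u := nu / 2 * b j * W ^+ 2.
have hu : `|u| <= 2^-1 by apply: u_bound; lra.
have hb := Bm_ge j.
have B0 := Bm_ge0.
have nb : `|u| = nu / 2 * `|b j| * W ^+ 2.
  rewrite /u !normrM (gtr0_norm W0) (gtr0_norm nu0) (gtr0_norm (_ : 0 < 2^-1)) ?expr2 //.
have hyy : 2 * Bm <= y ^+ 2.
  apply: le_trans hT3 _. rewrite ler_sqr // nnegrE; lra.
have yW2 : y ^+ 2 * W ^+ 2 = 1 by rewrite -exprMn yW expr1n.
have hau : 2 * a * `|u| <= 2^-1.
  rewrite nb.
  have -> : 2 * a * (nu / 2 * `|b j| * W ^+ 2) = (a * nu) * `|b j| * W ^+ 2 by field.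
  rewrite anu mul1r.
  have W2 : 0 < W ^+ 2 by rewrite exprn_gt0.
  have : `|b j| * W ^+ 2 <= Bm * W ^+ 2 by rewrite ler_pM2r.
  nra.
have T := taylor_pow a u a0 hu hau.
set e := expR (a * ln (1 + u)).
have key : y * e - y - b j / 2 * W = y * (e - 1 - a * u).
  rewrite /u. have -> : b j / 2 * W = (a * nu) * (y * W) * b j / 2 * W by rewrite anu yW; ring.
  ring.
rewrite key normrM (gtr0_norm y0).
have : y * `|e - 1 - a * u| <= y * ((8 * a ^+ 2 + 2 * a) * u ^+ 2) by rewrite ler_pM2l.
move/le_trans; apply.
have u2 : u ^+ 2 = (nu / 2) ^+ 2 * b j ^+ 2 * W ^+ 4 by rewrite /u; ring.
have bb : b j ^+ 2 <= Bm ^+ 2.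
  rewrite -real_normK ?num_real // ler_sqr // nnegrE //.
have -> : y * ((8 * a ^+ 2 + 2 * a) * u ^+ 2) = (8 * a ^+ 2 + 2 * a) * (nu / 2) ^+ 2 * b j ^+ 2 * W ^+ 3.
  rewrite u2. have -> : W ^+ 4 = W * W ^+ 3 by ring. 
  have -> : y * ((8 * a ^+ 2 + 2 * a) * ((nu / 2) ^+ 2 * b j ^+ 2 * (W * W ^+ 3))) = (y * W) * ((8 * a ^+ 2 + 2 * a) * (nu / 2) ^+ 2 * b j ^+ 2 * W ^+ 3) by ring.
  by rewrite yW mul1r.
rewrite /K4 -/a ler_pM2r ?exprn_gt0 //.
rewrite ler_pM2l //.
  apply: mulr_gt0; last by apply: exprn_gt0; apply: divr_gt0.
  have : 0 < a ^+ 2 by apply: exprn_gt0.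
  lra.
Qed.


Definition K3 : R := Bm / 2 + K4 + T0 * (expR (a / 2) + 1).

Lemma Zbnd y j : 0 <= y -> `|Zfun nu b (y, j) - y| <= K3.
Proof.
move=> y0.
have [hT1 [hT2 hT3]] := T0_ge.
have K40 := K4_ge0. have B0 := Bm_ge0.
have a0 : 0 < a by rewrite /a invr_gt0.
have E0 := expR_ge0 (a / 2).
case: (lerP T0 y) => hy.
- have h := Zfar y j hy.
  have yp : 0 < y by lra.
  have W0 : 0 < y^-1 by rewrite invr_gt0.
  have W1 : y^-1 <= 1 by rewrite invr_le1 // ?unitfE ?gt_eqF //; lra.
  have W3 : y^-1 ^+ 3 <= 1 by rewrite exprn_ile1 // ltW.
  have hb : `|b j / 2 * y^-1| <= Bm / 2.
    rewrite normrM (gtr0_norm W0) normrM (gtr0_norm (_ : 0 < 2^-1)) //.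
    have := Bm_ge j. nra.
  have : K4 * y^-1 ^+ 3 <= K4 by rewrite ler_piMr.
  have := ler_normD (Zfun nu b (y, j) - y - b j / 2 * y^-1) (b j / 2 * y^-1).
  rewrite subrK. rewrite /K3.
  have : 0 <= T0 * (expR (a / 2) + 1) by apply: mulr_ge0; lra.
  lra.
- rewrite Zform /= -/a.
  set M := Num.max y X0.
  have hM1 : M <= T0 by rewrite ge_max; apply/andP; split; lra.
  have hM0 : X0 <= M := M_ge y.
  set u := nu / 2 * b j * M^-1 ^+ 2.
  have hu : `|u| <= 2^-1 by apply: u_bound.
  have hu' : -2^-1 <= u <= 2^-1 by rewrite -ler_norml.
  case/andP: hu' => hu1 hu2.
  have l1 : ln (1 + u) <= u by apply: le_ln1Dx; lra.
  have t1 : a * ln (1 + u) <= a / 2.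
    have : a * ln (1 + u) <= a * 2^-1 by rewrite ler_pM2l //; lra.
    by [].
  have e1 : expR (a * ln (1 + u)) <= expR (a / 2) by rewrite ler_expR.
  have e0 := expR_ge0 (a * ln (1 + u)).
  have M0 : 0 <= M by have := X0_ge1; lra.
  have p1 : M * expR (a * ln (1 + u)) <= T0 * expR (a / 2).
    apply: ler_pM => //.
  have p0 : 0 <= M * expR (a * ln (1 + u)) by apply: mulr_ge0.
  rewrite /K3.
  have : 0 <= K4 + Bm / 2 by lra.
  move=> hK. rewrite ler_norml; apply/andP; split; nra.
Qed.


Definition A1 : R := 8 * K4 + Bm.
Definition A2 : R := Bm + 4 * (K3 + Bm).

Lemma K3_ge0 : 0 <= K3.
Proof.
have [hT1 [hT2 hT3]] := T0_ge.
have := K4_ge0. have := Bm_ge0. have := expR_ge0 (a / 2).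
rewrite /K3 => h1 h2 h3. have : 0 <= T0 * (expR (a / 2) + 1) by apply: mulr_ge0; lra.
lra.
Qed.

Lemma Znear x y j : 2 * T0 <= x -> 0 <= y ->
  `|Zfun nu b (y, j) - y - b j / 2 * x^-1| <= (A1 + A2 * (y - x) ^+ 2) * x^-1 ^+ 2.
Proof.
move=> hx y0.
have [hT1 [hT2 hT3]] := T0_ge.
have K40 := K4_ge0. have B0 := Bm_ge0. have K30 := K3_ge0.
have hb := Bm_ge j.
have xp : 0 < x by lra.
set X := x^-1.
have xX : x * X = 1 by rewrite mulfV // gt_eqF.
have X0p : 0 < X by rewrite invr_gt0.
have X1 : X <= 1 by rewrite invr_le1 // ?unitfE ?gt_eqF //; lra.
have X2 : 0 < X ^+ 2 by apply: exprn_gt0.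
have hbX : `|b j / 2 * X| <= Bm / 2.
  rewrite normrM (gtr0_norm X0p) normrM (gtr0_norm (_ : 0 < 2^-1)) //.
  nra.
case: (lerP (`|y - x|) (x / 2)) => hd.
- have hd' : - (x / 2) <= y - x <= x / 2 by rewrite -ler_norml.
  case/andP: hd' => hd1 hd2.
  have hy : T0 <= y by lra.
  have yp : 0 < y by lra.
  have h := Zfar y j hy.
  set Y := y^-1 in h *.
  have yY : y * Y = 1 by rewrite mulfV // gt_eqF.
  have Y0 : 0 < Y by rewrite invr_gt0.
  have Y2 : Y <= 2 * X.
    have : Y * (x / 2) <= Y * y by rewrite ler_pM2l //; lra.
    rewrite [Y * y]mulrC yY => h1.
    have : Y * (x / 2) * X <= X by rewrite -[leRHS]mul1r ler_pM2r.
    have -> : Y * (x / 2) * X = Y / 2 * (x * X) by ring.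
    rewrite xX mulr1. lra.
  have Y3 : Y ^+ 3 <= 8 * X ^+ 2.
    have : Y ^+ 3 <= (2 * X) ^+ 3 by rewrite lerXn2r // nnegrE; lra.
    have : X ^+ 3 <= X ^+ 2 by rewrite [X ^+ 3]exprS ler_piMl // ltW.
    have -> : (2 * X) ^+ 3 = 8 * X ^+ 3 by ring.
    lra.
  have dYX : Y - X = (x - y) * Y * X.
    have -> : (x - y) * Y * X = (x * X) * Y - (y * Y) * X by ring.
    by rewrite xX yY mul1r mul1r.
  have hb2 : `|b j / 2 * Y - b j / 2 * X| <= Bm * `|y - x| * X ^+ 2.
    have -> : b j / 2 * Y - b j / 2 * X = b j / 2 * (Y - X) by ring.
    rewrite dYX !normrM (gtr0_norm Y0) (gtr0_norm X0p) (gtr0_norm (_ : 0 < 2^-1)) // distrC.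
    have d0 := normr_ge0 (y - x).
    have bj0 := normr_ge0 (b j).
    have : `|b j| * 2^-1 * (`|y - x| * Y * X) <= Bm * 2^-1 * (`|y - x| * (2 * X) * X).
      apply: ler_pM; first by apply: mulr_ge0.
      - apply: mulr_ge0; first apply: mulr_ge0 => //; exact: ltW.
      - lra.
      - rewrite ler_pM2r //. apply: ler_wpM2l => //.
    move/le_trans; apply. rewrite expr2. lra.
  have dd : `|y - x| <= 1 + (y - x) ^+ 2.
    have := normr_ge0 (y - x). rewrite -real_normK ?num_real //. nra.
  have := ler_normD (Zfun nu b (y, j) - y - b j / 2 * Y) (b j / 2 * Y - b j / 2 * X).
  have -> : Zfun nu b (y, j) - y - b j / 2 * Y + (b j / 2 * Y - b j / 2 * X) = Zfun nu b (y, j) - y - b j / 2 * X by ring.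
  move/le_trans; apply.
  have : K4 * Y ^+ 3 <= K4 * (8 * X ^+ 2) by rewrite ler_wpM2l.
  have : Bm * `|y - x| * X ^+ 2 <= Bm * (1 + (y - x) ^+ 2) * X ^+ 2.
    by rewrite ler_pM2r // ler_wpM2l.
  have : 0 <= 4 * (K3 + Bm) * (y - x) ^+ 2 * X ^+ 2.
    apply: mulr_ge0; last exact: ltW. apply: mulr_ge0; last exact: sqr_ge0. lra.
  rewrite /A1 /A2. nra.
- have h := Zbnd y j y0.
  have hdX : 2^-1 < `|y - x| * X.
    have : x / 2 * X < `|y - x| * X by rewrite ltr_pM2r.
    have -> : x / 2 * X = (x * X) / 2 by ring.
    by rewrite xX mul1r.
  have hdX2 : 4^-1 < (y - x) ^+ 2 * X ^+ 2.
    rewrite -real_normK ?num_real // -exprMn.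
    have : 0 <= 2^-1 :> R by [].
    nra.
  have := ler_normD (Zfun nu b (y, j) - y) (- (b j / 2 * X)).
  rewrite normrN => h2.
  have : `|Zfun nu b (y, j) - y - b j / 2 * X| <= K3 + Bm by lra.
  move/le_trans; apply.
  have : (K3 + Bm) <= 4 * (K3 + Bm) * ((y - x) ^+ 2 * X ^+ 2) by nra.
  have : 0 <= A1 * X ^+ 2.
    apply: mulr_ge0; last exact: ltW. rewrite /A1; lra.
  rewrite /A2. nra.
Qed.

End Zlem.

Section Expect.
Set Implicit Arguments. Unset Strict Implicit.
Context {R : realType} {S : finType}.
Variables (Sigma : set (R * S)) (P : R * S -> R * S -> R) (z : R * S).
Hypothesis P0 : forall z w, 0 <= P z w.
Hypothesis Psum : (\esum_(w in Sigma) (P z w)%:E = 1)%E.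

Definition N (h : R * S -> R) : \bar R := \esum_(w in Sigma) (P z w * h w)%:E.

Lemma N_ge0 h : (forall w, 0 <= h w) -> (0 <= N h)%E.
Proof. by move=> h0; apply: esum_ge0 => w _; rewrite lee_fin mulr_ge0. Qed.

Lemma N_le h k : (forall w, Sigma w -> h w <= k w) -> (N h <= N k)%E.
Proof. by move=> hk; apply: le_esum => w Sw; rewrite lee_fin ler_wpM2l // hk. Qed.

Lemma N_ext h k : (forall w, Sigma w -> h w = k w) -> N h = N k.
Proof. by move=> hk; apply: eq_esum => w Sw; rewrite hk. Qed.

Lemma N_add h k : (forall w, 0 <= h w) -> (forall w, 0 <= k w) ->
  N (fun w => h w + k w) = (N h + N k)%E.
Proof.
move=> h0 k0; rewrite /N -esumD; last 2 first.
- by move=> w _; rewrite lee_fin mulr_ge0.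
- by move=> w _; rewrite lee_fin mulr_ge0.
by apply: eq_esum => w _; rewrite mulrDr EFinD.
Qed.

Lemma N_scale c h : 0 <= c -> (forall w, 0 <= h w) ->
  N (fun w => c * h w) = (c%:E * N h)%E.
Proof.
move=> c0 h0; rewrite /N /esum -ereal_supZl //; last first.
  by apply/set0P; exists 0%E; exists set0; [exact: fsets_set0 | rewrite fsbig_set0].
congr ereal_sup; apply/seteqP; split => x /=.
- move=> [A hA <-]; exists (\sum_(w \in A) (P z w * h w)%:E)%E; first by exists A.
  rewrite ge0_mule_fsumr; last by move=> w; rewrite lee_fin mulr_ge0.
  by apply: eq_fsbigr => w _; rewrite -EFinM mulrCA.
- move=> [y [A hA <-] <-]; exists A => //.
  rewrite ge0_mule_fsumr; last by move=> w; rewrite lee_fin mulr_ge0.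
  by apply: eq_fsbigr => w _; rewrite -EFinM mulrCA.
Qed.

Lemma N_one : N (fun _ => 1) = 1%E.
Proof. by rewrite /N -Psum; apply: eq_esum => w _; rewrite mulr1. Qed.

Lemma N_zero : N (fun _ => 0) = 0%E.
Proof. by rewrite /N; apply: esum1 => w _; rewrite mulr0. Qed.

Lemma fin_le (x y : \bar R) : (0 <= x)%E -> (x <= y)%E -> y \is a fin_num -> x \is a fin_num.
Proof.
move=> x0 xy yf; have y0 := le_trans x0 xy.
rewrite ge0_fin_numE //; rewrite ge0_fin_numE // in yf; exact: le_lt_trans xy yf.
Qed.

Lemma maxsub (x : R) : Num.max x 0 - Num.max (- x) 0 = x.
Proof.
case: (boolP (0 <= x)) => hx; last (rewrite -ltNge in hx).
- have -> : Num.max x 0 = x by apply/max_idPl.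
  have -> : Num.max (- x) 0 = 0 by apply/max_idPr; lra.
  by rewrite subr0.
- have -> : Num.max x 0 = 0 by apply/max_idPr; lra.
  have -> : Num.max (- x) 0 = - x by apply/max_idPl; lra.
  by rewrite sub0r opprK.
Qed.

Lemma maxadd (x : R) : Num.max x 0 + Num.max (- x) 0 = `|x|.
Proof.
case: (boolP (0 <= x)) => hx; last (rewrite -ltNge in hx).
- have -> : Num.max x 0 = x by apply/max_idPl.
  have -> : Num.max (- x) 0 = 0 by apply/max_idPr; lra.
  by rewrite addr0 ger0_norm.
- have -> : Num.max x 0 = 0 by apply/max_idPr; lra.
  have -> : Num.max (- x) 0 = - x by apply/max_idPl; lra.
  by rewrite add0r ltr0_norm.
Qed.

Let gp (g : R * S -> R) w := Num.max (g w) 0.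
Let gn (g : R * S -> R) w := Num.max (- g w) 0.

Lemma gp_ge0 g w : 0 <= gp g w. Proof. by rewrite /gp le_max lexx orbT. Qed.
Lemma gn_ge0 g w : 0 <= gn g w. Proof. by rewrite /gn le_max lexx orbT. Qed.

Lemma Ex_dec g u v : (forall w, 0 <= u w) -> (forall w, 0 <= v w) ->
  N u \is a fin_num -> N v \is a fin_num ->
  (forall w, Sigma w -> g w = u w - v w) ->
  Ex Sigma P z g = (fine (N u) - fine (N v))%:E.
Proof.
move=> u0 v0 fu fv hg.
have e : N (fun w => gp g w + v w) = N (fun w => gn g w + u w).
  apply: N_ext => w Sw.
  have := maxsub (g w). rewrite /gp /gn hg //. lra.
rewrite !N_add in e; try (move=> w; exact: gp_ge0); try (move=> w; exact: gn_ge0); try done.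
have fp : N (gp g) \is a fin_num.
  apply: fin_le fu; first by apply: N_ge0 => w; exact: gp_ge0.
  apply: N_le => w Sw. rewrite /gp hg // ge_max u0 andbT. have := v0 w. lra.
have fn : N (gn g) \is a fin_num.
  apply: fin_le fv; first by apply: N_ge0 => w; exact: gn_ge0.
  apply: N_le => w Sw. rewrite /gn hg // ge_max v0 andbT. have := u0 w. lra.
rewrite /Ex -/(N (gp g)) -/(N (gn g)).
move: e; rewrite -(fineK fp) -(fineK fn) -(fineK fu) -(fineK fv) -!EFinD.
move=> e2; have e3 := EFin_inj e2; rewrite /=; congr EFin; lra.
Qed.

Definition integ (g : R * S -> R) := N (fun w => `|g w|) \is a fin_num.
Definition Er (g : R * S -> R) : R := fine (Ex Sigma P z g).

Lemma gp_le g w : gp g w <= `|g w|.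
Proof. rewrite -maxadd /gp. have := gn_ge0 g w. rewrite /gn. lra. Qed.
Lemma gn_le g w : gn g w <= `|g w|.
Proof. rewrite -maxadd /gn. have := gp_ge0 g w. rewrite /gp. lra. Qed.

Lemma integ_fp g : integ g -> N (gp g) \is a fin_num.
Proof.
move=> ig; apply: fin_le ig; first by apply: N_ge0 => w; exact: gp_ge0.
by apply: N_le => w _; exact: gp_le.
Qed.
Lemma integ_fn g : integ g -> N (gn g) \is a fin_num.
Proof.
move=> ig; apply: fin_le ig; first by apply: N_ge0 => w; exact: gn_ge0.
by apply: N_le => w _; exact: gn_le.
Qed.

Lemma Er_dec g u v : (forall w, 0 <= u w) -> (forall w, 0 <= v w) ->
  N u \is a fin_num -> N v \is a fin_num ->
  (forall w, Sigma w -> g w = u w - v w) ->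
  Er g = fine (N u) - fine (N v).
Proof. by move=> *; rewrite /Er (@Ex_dec g u v). Qed.

Lemma Er_pn g : integ g -> Er g = fine (N (gp g)) - fine (N (gn g)).
Proof.
move=> ig; apply: Er_dec; try (move=> w; exact: gp_ge0); try (move=> w; exact: gn_ge0).
- exact: integ_fp.
- exact: integ_fn.
- by move=> w _; rewrite /gp /gn maxsub.
Qed.

Lemma Ex_fin g : integ g -> Ex Sigma P z g = (Er g)%:E.
Proof.
move=> ig; rewrite /Er (@Ex_dec g (gp g) (gn g)) //; try (move=> w; exact: gp_ge0); try (move=> w; exact: gn_ge0).
- exact: integ_fp.
- exact: integ_fn.
- by move=> w _; rewrite /gp /gn maxsub.
Qed.

Lemma ErD g h : integ g -> integ h -> Er (fun w => g w + h w) = Er g + Er h.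
Proof.
move=> ig ih.
rewrite (Er_pn ig) (Er_pn ih).
have hp := integ_fp ig. have hn := integ_fn ig.
have kp := integ_fp ih. have kn := integ_fn ih.
rewrite (@Er_dec _ (fun w => gp g w + gp h w) (fun w => gn g w + gn h w)).
- rewrite !N_add; try (move=> w; exact: gp_ge0); try (move=> w; exact: gn_ge0).
  rewrite !fineD //. lra.
- move=> w; apply: addr_ge0; exact: gp_ge0.
- move=> w; apply: addr_ge0; exact: gn_ge0.
- rewrite N_add ?fin_numD ?hp ?kp //; move=> w; exact: gp_ge0.
- rewrite N_add ?fin_numD ?hn ?kn //; move=> w; exact: gn_ge0.
- move=> w _. have := maxsub (g w). have := maxsub (h w). rewrite /gp /gn. lra.
Qed.

Lemma ErZ c g : integ g -> Er (fun w => c * g w) = c * Er g.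
Proof.
move=> ig; rewrite (Er_pn ig).
have hp := integ_fp ig. have hn := integ_fn ig.
case: (boolP (0 <= c)) => hc; last (rewrite -ltNge in hc).
- rewrite (@Er_dec _ (fun w => c * gp g w) (fun w => c * gn g w)).
  + rewrite !N_scale //; try (move=> w; exact: gp_ge0); try (move=> w; exact: gn_ge0).
    rewrite !fineM //. simpl. ring.
  + move=> w; apply: mulr_ge0 => //; exact: gp_ge0.
  + move=> w; apply: mulr_ge0 => //; exact: gn_ge0.
  + rewrite N_scale //; [exact: fin_numM | move=> w; exact: gp_ge0].
  + rewrite N_scale //; [exact: fin_numM | move=> w; exact: gn_ge0].
  + move=> w _. have := maxsub (g w). rewrite /gp /gn => e. rewrite -{1}e. ring.
- have hc' : 0 <= - c by lra.
  rewrite (@Er_dec _ (fun w => - c * gn g w) (fun w => - c * gp g w)).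
  + rewrite !N_scale //; try (move=> w; exact: gp_ge0); try (move=> w; exact: gn_ge0).
    rewrite !fineM //. simpl. ring.
  + move=> w; apply: mulr_ge0 => //; exact: gn_ge0.
  + move=> w; apply: mulr_ge0 => //; exact: gp_ge0.
  + rewrite N_scale //; [exact: fin_numM | move=> w; exact: gn_ge0].
  + rewrite N_scale //; [exact: fin_numM | move=> w; exact: gp_ge0].
  + move=> w _. have := maxsub (g w). rewrite /gp /gn => e. rewrite -{1}e. ring.
Qed.

Lemma Er_nn h : (forall w, 0 <= h w) -> N h \is a fin_num -> Er h = fine (N h).
Proof.
move=> h0 fh; rewrite (@Er_dec h h (fun _ => 0)) //.
- by rewrite N_zero /= subr0.
- by rewrite N_zero.
- by move=> w _; rewrite subr0.
Qed.

Lemma Er_cst c : Er (fun _ => c) = c.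
Proof.
have e1 : forall d : R, 0 <= d -> N (fun _ => d) = d%:E.
  move=> d d0. have -> : (fun _ : R * S => d) = (fun _ => d * 1) by apply: funext => w; rewrite mulr1.
  by rewrite N_scale // N_one mule1.
rewrite (@Er_dec _ (fun _ => Num.max c 0) (fun _ => Num.max (- c) 0)).
- by rewrite !e1 /= ?maxsub //; rewrite le_max lexx orbT.
- by move=> _; rewrite le_max lexx orbT.
- by move=> _; rewrite le_max lexx orbT.
- by rewrite e1 // le_max lexx orbT.
- by rewrite e1 // le_max lexx orbT.
- by move=> w _; rewrite maxsub.
Qed.

Lemma Er_le g h : integ g -> integ h -> (forall w, Sigma w -> g w <= h w) -> Er g <= Er h.
Proof.
move=> ig ih gh.
rewrite (Er_pn ig) (Er_pn ih).
have hp := integ_fp ig. have hn := integ_fn ig.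
have kp := integ_fp ih. have kn := integ_fn ih.
have : (N (fun w => (gp g w + gn h w)%R) <= N (fun w => (gp h w + gn g w)%R))%E.
  apply: N_le => w Sw. have := maxsub (g w). have := maxsub (h w). have := gh w Sw.
  rewrite /gp /gn. lra.
rewrite !N_add; try (move=> w; exact: gp_ge0); try (move=> w; exact: gn_ge0).
rewrite -(fineK hp) -(fineK hn) -(fineK kp) -(fineK kn) -!EFinD lee_fin /=. lra.
Qed.

Lemma integ_le g k : (forall w, Sigma w -> `|g w| <= k w) -> N k \is a fin_num -> integ g.
Proof.
move=> gk fk; apply: fin_le fk; first by apply: N_ge0.
exact: N_le.
Qed.

Lemma integ_abs g : integ g -> integ (fun w => `|g w|).
Proof. by move=> ig; apply: integ_le ig => w _; rewrite normr_id. Qed.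

Lemma Er_abs g : integ g -> `|Er g| <= Er (fun w => `|g w|).
Proof.
move=> ig. have ia := integ_abs ig.
rewrite ler_norml; apply/andP; split.
- have ineg : integ (fun w => -1 * `|g w|) by apply: integ_le ia => w _; rewrite normrM normrN1 mul1r normr_id.
  have h1 : Er (fun w => -1 * `|g w|) <= Er g.
    apply: Er_le => // w _. rewrite mulN1r. have := ler_norm (- g w). rewrite normrN. lra.
  rewrite ErZ // in h1. lra.
- apply: Er_le => // w _; exact: ler_norm.
Qed.

Lemma Er_ext g h : (forall w, Sigma w -> g w = h w) -> Er g = Er h.
Proof.
move=> gh; rewrite /Er /Ex; congr (fine (_ - _))%E; apply: eq_esum => w Sw; by rewrite gh.
Qed.

Lemma integ_add g h : integ g -> integ h -> integ (fun w => g w + h w).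
Proof.
move=> ig ih; apply: (@integ_le _ (fun w => `|g w| + `|h w|)).
- move=> w _; exact: ler_normD.
- rewrite N_add ?fin_numD; [by apply/andP; split | move=> w; exact: normr_ge0 | move=> w; exact: normr_ge0].
Qed.

Lemma integ_scale c g : integ g -> integ (fun w => c * g w).
Proof.
move=> ig; apply: (@integ_le _ (fun w => `|c| * `|g w|)).
- by move=> w _; rewrite normrM.
- by rewrite N_scale // fin_numM.
Qed.

Lemma integ_bnd g c : 0 <= c -> (forall w, Sigma w -> `|g w| <= c) -> integ g.
Proof.
move=> c0 gc; apply: (@integ_le _ (fun w => c * 1)).
- by move=> w Sw; rewrite mulr1; exact: gc.
- by rewrite N_scale // N_one mule1.
Qed.

Lemma integ_sum (r : seq S) (F : S -> R * S -> R) : (forall j, integ (F j)) ->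
  integ (fun w => \sum_(j <- r) F j w).
Proof.
move=> iF; elim: r => [|j r IH].
- apply: (@integ_bnd _ 0) => // w _; by rewrite big_nil normr0.
- under eq_fun do rewrite big_cons. exact: integ_add.
Qed.

Lemma Er_sum (r : seq S) (F : S -> R * S -> R) : (forall j, integ (F j)) ->
  Er (fun w => \sum_(j <- r) F j w) = \sum_(j <- r) Er (F j).
Proof.
move=> iF; elim: r => [|j r IH].
- rewrite big_nil. under eq_fun do rewrite big_nil. exact: Er_cst.
- rewrite big_cons. under eq_fun do rewrite big_cons.
  rewrite ErD //; first by rewrite IH.
  exact: integ_sum.
Qed.

Lemma N_ind j : N (fun w => (w.2 == j)%:R) = qx Sigma P z j.
Proof.
rewrite /qx esum_mkcondr; apply: eq_esum => w _.
case: (boolP (w.2 == j)) => hj.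
- rewrite (_ : true%:R = 1 :> R) // mulr1 mem_set //; exact/eqP.
- rewrite (_ : false%:R = 0 :> R) // mulr0 memNset //= => e; move: hj; by rewrite e eqxx.
Qed.

Lemma integ_ind j : integ (fun w => (w.2 == j)%:R).
Proof. apply: (@integ_bnd _ 1) => // w _; by case: (w.2 == j); rewrite ?normr1 ?normr0. Qed.

Lemma Er_ind j : Er (fun w => (w.2 == j)%:R) = fine (qx Sigma P z j).
Proof.
rewrite Er_nn; first by rewrite N_ind.
- by move=> w; case: (w.2 == j).
- have := integ_ind j. rewrite /integ.
  by under eq_fun do rewrite ger0_norm ?ler0n //.
Qed.

Lemma Er_fun2 (h : S -> R) : Er (fun w => h w.2) = \sum_(j : S) h j * fine (qx Sigma P z j).
Proof.
have e : (fun w : R * S => h w.2) = (fun w => \sum_(j <- index_enum S) h j * (w.2 == j)%:R).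
  apply: funext => w. rewrite (bigD1 w.2) //= eqxx mulr1 big1 ?addr0 //.
  move=> j hj. by rewrite eq_sym (negbTE hj) mulr0.
rewrite e Er_sum.
- apply: eq_bigr => j _. by rewrite ErZ ?Er_ind // integ_ind.
- move=> j; apply: integ_scale; exact: integ_ind.
Qed.

End Expect.

Section Main.
Set Implicit Arguments. Unset Strict Implicit.
Context {R : realType} {S : finType}.
Variables (Sigma : set (R * S)) (P : R * S -> R * S -> R) (z : R * S).
Hypothesis P0 : forall z w, 0 <= P z w.
Hypothesis Psum : (\esum_(w in Sigma) (P z w)%:E = 1)%E.
Variables (p Cp : R).
Hypothesis hp : 2 <= p.
Hypothesis hC : (Ex Sigma P z (fun w => powR `|w.1 - z.1| p)%R <= Cp%:E)%E.

Lemma integ_dom g k : integ Sigma P z k -> (forall w, Sigma w -> `|g w| <= k w) ->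
  integ Sigma P z g.
Proof.
move=> ik gk; apply: (integ_le P0 (k := fun w => `|k w|)) => //.
move=> w Sw; apply: le_trans (gk w Sw) _; exact: ler_norm.
Qed.

Let pw (w : R * S) : R := powR `|w.1 - z.1| p.

Lemma pw_N : (N Sigma P z pw <= Cp%:E)%E /\ N Sigma P z pw \is a fin_num.
Proof.
have e : Ex Sigma P z pw = N Sigma P z pw.
  change (N Sigma P z (fun w => Num.max (pw w) 0%R) - N Sigma P z (fun w => Num.max (- pw w)%R 0%R) = N Sigma P z pw)%E.
  rewrite (@N_ext _ _ Sigma P z (fun w => Num.max (- pw w) 0) (fun _ => 0)); last first.
    move=> w _; apply/max_idPr; have := powR_ge0 `|w.1 - z.1| p; rewrite /pw; lra.
  rewrite N_zero sube0; apply: N_ext => w _; apply/max_idPl; exact: powR_ge0.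
have h : (N Sigma P z pw <= Cp%:E)%E by rewrite -e.
split => //; apply: fin_le h _ => //.
by apply: N_ge0 => // w; exact: powR_ge0.
Qed.

Lemma integ_pw : integ Sigma P z pw.
Proof.
apply: (integ_le P0 (k := pw)); last exact: pw_N.2.
by move=> w _; rewrite ger0_norm // powR_ge0.
Qed.

Lemma sq_le_pw (t : R) : 0 <= t -> t ^+ 2 <= 1 + powR t p.
Proof.
move=> t0; have := powR_ge0 t p.
case: (lerP t 1) => ht.
- have : t ^+ 2 <= 1 by rewrite expr_le1.
  lra.
- have : powR t 2 <= powR t p by apply: ler_powR => //; lra.
  rewrite -[2]/(2%:R) powR_mulrn //; first lra.
Qed.

Lemma integ_sq : integ Sigma P z (fun w => (w.1 - z.1) ^+ 2).
Proof.
apply: (integ_dom (k := fun w => 1 + pw w)).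
- apply: (integ_add P0) => //; last exact: integ_pw.
  by apply: (integ_bnd P0 Psum (c := 1)) => // w _; rewrite normr1.
- move=> w _; rewrite ger0_norm ?sqr_ge0 //.
  rewrite -real_normK ?num_real //; exact: sq_le_pw.
Qed.

Lemma Er_sq : Er Sigma P z (fun w => (w.1 - z.1) ^+ 2) <= 1 + Cp.
Proof.
have i1 : integ Sigma P z (fun _ => 1) by apply: (integ_bnd P0 Psum (c := 1)) => // w _; rewrite normr1.
have ih : integ Sigma P z (fun w => 1 + pw w) := integ_add P0 i1 integ_pw.
have h1 : Er Sigma P z (fun w => (w.1 - z.1) ^+ 2) <= Er Sigma P z (fun w => 1 + pw w).
  apply: (Er_le P0) => //; first exact: integ_sq. move=> w _; rewrite -real_normK ?num_real //; exact: sq_le_pw.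
apply: le_trans h1 _.
rewrite (ErD P0) //; last exact: integ_pw. rewrite (Er_cst P0 Psum 1) lerD2l.
have := hC. rewrite -/pw (Ex_fin P0 integ_pw) // lee_fin.
Qed.

Lemma integ_d : integ Sigma P z (fun w => w.1 - z.1).
Proof.
apply: (integ_dom (k := fun w => 1 + (w.1 - z.1) ^+ 2)).
- apply: (integ_add P0) => //; last exact: integ_sq.
  by apply: (integ_bnd P0 Psum (c := 1)) => // w _; rewrite normr1.
- move=> w _. have := normr_ge0 (w.1 - z.1). rewrite -real_normK ?num_real //. nra.
Qed.

Variables (nu : R) (b : S -> R).
Hypothesis nu0 : 0 < nu.
Hypothesis Snn : forall w, Sigma w -> 0 <= w.1.
Hypothesis z0 : 0 <= z.1.

Let K := K3 nu b.
Let Zz := Zfun nu b z.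

Lemma Zz_bnd : `|Zz - z.1| <= K.
Proof. rewrite /Zz (_ : Zfun nu b z = Zfun nu b (z.1, z.2)); last by rewrite -surjective_pairing. exact: Zbnd. Qed.

Lemma dZ_bnd w : Sigma w -> `|Zfun nu b w - Zz| <= `|w.1 - z.1| + 2 * K.
Proof.
move=> Sw.
have h1 : `|Zfun nu b w - w.1| <= K.
    rewrite (_ : Zfun nu b w = Zfun nu b (w.1, w.2)); last by rewrite -surjective_pairing.
    apply: Zbnd => //; exact: Snn.
have h2 := Zz_bnd.
have -> : Zfun nu b w - Zz = (w.1 - z.1) + (Zfun nu b w - w.1) - (Zz - z.1) by ring.
apply: le_trans (ler_normB _ _) _.
apply: le_trans (lerD (ler_normD _ _) (lexx _)) _.
lra.
Qed.

Lemma integ_dZ : integ Sigma P z (fun w => Zfun nu b w - Zz).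
Proof.
apply: (integ_dom (k := fun w => `|w.1 - z.1| + 2 * K)).
- apply: (integ_add P0); first exact: (integ_abs P0) integ_d.
  apply: (integ_bnd P0 Psum (c := `|2 * K|)) => // w _.
- exact: dZ_bnd.
Qed.

Lemma part2 : (Ex Sigma P z (fun w => (Zfun nu b w - Zz) ^+ 2)%R <= (2 * (1 + Cp) + 8 * K ^+ 2)%:E)%E.
Proof.
have K0 : 0 <= K := le_trans (normr_ge0 _) Zz_bnd.
set k := fun w : R * S => 2 * (w.1 - z.1) ^+ 2 + 8 * K ^+ 2.
have ik : integ Sigma P z k.
  apply: (integ_add P0); first exact: (integ_scale P0) integ_sq.
  apply: (integ_bnd P0 Psum (c := `|8 * K ^+ 2|)) => // w _.
have pt : forall w, Sigma w -> (Zfun nu b w - Zz) ^+ 2 <= k w.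
  move=> w Sw.
  have h1 : `|Zfun nu b w - w.1| <= K.
    rewrite (_ : Zfun nu b w = Zfun nu b (w.1, w.2)); last by rewrite -surjective_pairing.
    apply: Zbnd => //; exact: Snn.
  have h2 := Zz_bnd.
  move: h1 h2; rewrite !ler_norml => /andP[h1 h1'] /andP[h2 h2'].
  have -> : Zfun nu b w - Zz = (w.1 - z.1) + ((Zfun nu b w - w.1) - (Zz - z.1)) by ring.
  rewrite /k. set D := (Zfun nu b w - w.1) - (Zz - z.1).
  have hD : D ^+ 2 <= 4 * K ^+ 2.
    have : `|D| <= 2 * K by rewrite ler_norml /D; apply/andP; split; lra.
    move=> hD. have : `|D| ^+ 2 <= (2 * K) ^+ 2 by rewrite ler_sqr // nnegrE; lra.
    rewrite real_normK ?num_real //. move=> h. apply: le_trans h _. rewrite exprMn. lra.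
  have := sqr_ge0 ((w.1 - z.1) - D).
  nra.
have ig : integ Sigma P z (fun w => (Zfun nu b w - Zz) ^+ 2).
  apply: (integ_dom (k := k)) => // w Sw.
  rewrite ger0_norm ?sqr_ge0 //. exact: pt.
rewrite (Ex_fin P0 ig) lee_fin.
apply: le_trans (Er_le P0 ig ik pt) _.
rewrite /k (ErD P0); last 2 first.
- exact: (integ_scale P0) integ_sq.
- by apply: (integ_bnd P0 Psum (c := `|8 * K ^+ 2|)).
rewrite (ErZ P0) ?integ_sq // (Er_cst P0 Psum (8 * K ^+ 2)).
have := Er_sq. lra.
Qed.

Lemma part1 (Q : S -> R) (c eps1 eps2 : R) :
  2 * T0 nu b <= z.1 ->
  `|Er Sigma P z (fun w => w.1 - z.1) - c / z.1| <= eps1 / z.1 ->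
  (forall j, `|fine (qx Sigma P z j) - Q j| <= eps2) ->
  \sum_j Q j = 1 ->
  `|Er Sigma P z (fun w => Zfun nu b w - Zz)
     - (c / z.1 + (2 * z.1)^-1 * \sum_j (b j - b z.2) * Q j)|
   <= eps1 / z.1 + z.1^-1 / 2 * (\sum_j `|b j|) * eps2
      + (A1 nu b + A1 nu b + A2 nu b * (1 + Cp)) * z.1^-1 ^+ 2.
Proof.
move=> hx hmu hq hQ.
have [hT1 [hT2 hT3]] := T0_ge nu b.
have xp : 0 < z.1 by lra.
set x := z.1 in hx hmu xp *.
set X := x^-1.
have X0p : 0 < X by rewrite invr_gt0.
have A10 : 0 <= A1 nu b.
  rewrite /A1. have := K4_ge0 nu b nu0. have := Bm_ge0 b. lra.
have A20 : 0 <= A2 nu b.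
  rewrite /A2. have := K3_ge0 nu b nu0. have := Bm_ge0 b. lra.
set e := fun w : R * S => Zfun nu b w - w.1 - b w.2 / 2 * X.
set bf := fun w : R * S => b w.2 / 2 * X.
set r := Zz - x.
have dec : (fun w => Zfun nu b w - Zz) =
    (fun w => ((w.1 - z.1) + e w) + bf w + (fun _ => - r) w).
  apply: funext => w. rewrite /e /bf /r /x. ring.
set k := fun w : R * S => A1 nu b * X ^+ 2 + (A2 nu b * X ^+ 2) * (w.1 - z.1) ^+ 2.
have ik : integ Sigma P z k.
  apply: (integ_add P0); last exact: (integ_scale P0) integ_sq.
  by apply: (integ_bnd P0 Psum (c := `|A1 nu b * X ^+ 2|)).
have ek : forall w, Sigma w -> `|e w| <= k w.
  move=> w Sw. rewrite /e /k.
  rewrite (_ : Zfun nu b w = Zfun nu b (w.1, w.2)); last by rewrite -surjective_pairing.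
  apply: le_trans (Znear nu b nu0 x w.1 w.2 hx (Snn Sw)) _.
  rewrite -/X le_eqVlt; apply/orP; left; apply/eqP; rewrite /x; ring.
have ie : integ Sigma P z e by apply: (integ_dom (k := k)).
have ibf : integ Sigma P z bf.
  apply: (integ_bnd P0 Psum (c := \big[Num.max/0]_i `|b i| * X)).
  - apply: mulr_ge0; [exact: Bm_ge0 | exact: ltW].
  - move=> w _. rewrite /bf normrM (gtr0_norm X0p) ler_pM2r // normrM.
    have := Bm_ge b w.2. have := normr_ge0 (b w.2).
    rewrite (gtr0_norm (_ : 0 < 2^-1)) //. lra.
have ir : integ Sigma P z (fun _ : R * S => - r).
  by apply: (integ_bnd P0 Psum (c := `|- r|)).
rewrite dec (ErD P0) //; last first.
  apply: (integ_add P0) => //. exact: (integ_add P0) integ_d ie.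
rewrite (ErD P0) //; last exact: (integ_add P0) integ_d ie.
rewrite (ErD P0) //; last exact: integ_d.
rewrite (Er_cst P0 Psum (- r)).
rewrite /bf (Er_fun2 P0 Psum (fun j => b j / 2 * X)).
have he : `|Er Sigma P z e| <= (A1 nu b + A2 nu b * (1 + Cp)) * X ^+ 2.
  apply: le_trans (Er_abs P0 ie) _.
  have ia : integ Sigma P z (fun w => `|e w|) := integ_abs P0 ie.
  apply: le_trans (Er_le P0 ia ik ek) _.
  rewrite /k (ErD P0) //; last 2 first.
  - by apply: (integ_bnd P0 Psum (c := `|A1 nu b * X ^+ 2|)).
  - exact: (integ_scale P0) integ_sq.
  rewrite (Er_cst P0 Psum) (ErZ P0) //; last exact: integ_sq.
  have := Er_sq. have : 0 <= A2 nu b * X ^+ 2 by apply: mulr_ge0 => //; exact: sqr_ge0.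
  nra.
have hr : `|r - b z.2 / 2 * X| <= A1 nu b * X ^+ 2.
  have := Znear nu b nu0 x x z.2 hx (ltW xp).
  rewrite subrr expr0n /= mulr0 addr0 -/X.
  rewrite /r /Zz (_ : Zfun nu b z = Zfun nu b (z.1, z.2)) //; by rewrite -surjective_pairing.
have hqs : `|\sum_j b j / 2 * X * fine (qx Sigma P z j) - \sum_j b j / 2 * X * Q j|
    <= X / 2 * (\sum_j `|b j|) * eps2.
  rewrite -sumrB. apply: le_trans (ler_norm_sum _ _ _) _.
  rewrite mulr_sumr mulr_suml. apply: ler_sum => j _.
  rewrite -mulrBr normrM.
  have -> : `|b j / 2 * X| = X / 2 * `|b j|.
    rewrite !normrM (gtr0_norm X0p) (gtr0_norm (_ : 0 < 2^-1)) //. ring.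
  apply: ler_wpM2l => //. apply: mulr_ge0 => //. apply: mulr_ge0 => //; exact: ltW.
have hsum : \sum_j (b j - b z.2) * Q j = \sum_j b j * Q j - b z.2.
  under eq_bigr do rewrite mulrBl. by rewrite sumrB -mulr_sumr hQ mulr1.
have hsum2 : \sum_j b j / 2 * X * Q j = X / 2 * \sum_j b j * Q j.
  rewrite mulr_sumr. apply: eq_bigr => j _. ring.
rewrite hsum invfM -/X.
move: he hr hqs hmu; rewrite hsum2 -/X.
set E1 := Er Sigma P z (fun w => w.1 - z.1).
set E2 := Er Sigma P z e.
set SQ := \sum_j b j / 2 * X * fine (qx Sigma P z j).
set SQQ := \sum_j b j * Q j.
rewrite !ler_norml => /andP[h1 h1'] /andP[h2 h2'] /andP[h3 h3'] /andP[h4 h4'].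
apply/andP; split; lra.
Qed.

End Main.


Unset Implicit Arguments. Set Strict Implicit.

Theorem lemma4p5 (R : realType) (S : finType) (s0 : S)
  (Sigma : set (R * S)) (P : R * S -> R * S -> R)
  (p Cp : R) (Q : S -> S -> R) (c s2 b : S -> R) (nu : R) :
  (forall z, Sigma z -> 0 <= z.1) ->
  locally_finite Sigma ->
  markov_kernel Sigma P ->
  irreducible_chain Sigma P ->
  (forall k (M : R), exists x, Sigma (x, k) /\ M < x) ->
  2 < p ->
  (forall z, Sigma z -> (Ex Sigma P z (fun w => powR `|w.1 - z.1| p)%R <= Cp%:E)%E) ->
  irreducible_stochastic Q ->
  (forall i j (eps : R), 0 < eps -> exists M : R, forall x, Sigma (x, i) -> M < x ->
      (`| qx Sigma P (x, i) j - (Q i j)%:E | <= eps%:E)%E) ->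
  (forall i, 0 <= s2 i) -> (exists i, s2 i != 0) ->
  (forall i (eps : R), 0 < eps -> exists M : R, forall x, Sigma (x, i) -> M < x ->
      (`| Ex Sigma P (x, i) (fun w => w.1 - x)%R - (c i / x)%:E | <= (eps / x)%:E)%E) ->
  (forall i (eps : R), 0 < eps -> exists M : R, forall x, Sigma (x, i) -> M < x ->
      (`| Ex Sigma P (x, i) (fun w => (w.1 - x) ^+ 2)%R - (s2 i)%:E | <= eps%:E)%E) ->
  0 < nu -> nu <= p ->
  (forall i (eps : R), 0 < eps -> exists M : R, forall x, Sigma (x, i) -> M < x ->
      (`| Ex Sigma P (x, i) (fun w => Zfun nu b w - Zfun nu b (x, i))%R
          - (c i / x + (2 * x)^-1 * \sum_(j : S) (b j - b i) * Q i j)%:E |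
        <= (eps / x)%:E)%E)
  /\
  (exists B : R, forall z, Sigma z ->
      (Ex Sigma P z (fun w => (Zfun nu b w - Zfun nu b z) ^+ 2)%R <= B%:E)%E).
Proof.
move=> Snn lf mk irr unb hp2 hC hQ hq s20 s2ne hmu hs2 nu0 hnup.
case: mk => P0 [_ Psum].
have hp : 2 <= p by lra.
case: hQ => [Q0 [Qsum _]].
split; last first.
  exists (2 * (1 + Cp) + 8 * K3 nu b ^+ 2) => z Sz.
  exact: (part2 P0 (Psum z Sz) hp (hC z Sz) b nu0 Snn (Snn z Sz)).
move=> i eps eps0.
set Bs := \sum_j `|b j|.
have Bs0 : 0 <= Bs by apply: sumr_ge0 => j _; exact: normr_ge0.
set eps2 := eps / (2 * (Bs + 1)).
have e2p : 0 < eps2 by apply: divr_gt0 => //; lra.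
have [Mq hMq] := choice (fun j => hq i j eps2 e2p).
have e4 : 0 < eps / 4 by apply: divr_gt0.
have [Mmu hMmu] := hmu i (eps / 4) e4.
set CC := A1 nu b + A1 nu b + A2 nu b * (1 + Cp).
set M := Num.max Mmu (Num.max (\big[Num.max/0]_j Mq j) (Num.max (2 * T0 nu b) (4 * (`|CC| + 1) / eps))).
exists M => x Sx hx.
move: hx; rewrite /M !gt_max => /and4P[hx1 hx2 hx3 hx4].
have hxq : forall j, Mq j < x.
  move=> j; apply: le_lt_trans hx2; apply/bigmax_geP; right; by exists j.
have [hT1 [hT2 hT3]] := T0_ge nu b.
have xp : 0 < x by lra.
have Ps := Psum _ Sx.
have hCx := hC _ Sx.
have hmu' : `|Er Sigma P (x, i) (fun w => w.1 - (x, i).1) - c i / (x, i).1| <= eps / 4 / (x, i).1.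
  have := hMmu x Sx hx1.
  rewrite (Ex_fin P0 (integ_d P0 Ps hp hCx)) -EFinB abse_EFin lee_fin. done.
have hq' : forall j, `|fine (qx Sigma P (x, i) j) - Q i j| <= eps2.
  move=> j.
  have fq : qx Sigma P (x, i) j \is a fin_num.
    rewrite -N_ind. apply: (fin_le (y := N Sigma P (x, i) (fun _ => 1))).
    - by apply: N_ge0 => // w; case: (w.2 == j).
    - by apply: N_le => // w _; case: (w.2 == j).
    - by rewrite (N_one Ps).
  have := hMq j x Sx (hxq j).
  by rewrite -(fineK fq) -EFinB abse_EFin lee_fin.
have h2T : 2 * T0 nu b <= (x, i).1 by rewrite /=; lra.
have P1 := part1 P0 Ps hp hCx nu0 Snn h2T hmu' hq' (Qsum i).
rewrite (Ex_fin P0 (integ_dZ P0 Ps hp hCx b nu0 Snn (ltW xp))) -EFinB abse_EFin lee_fin.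
apply: le_trans P1 _.
rewrite /= -/Bs -/CC.
set X := x^-1.
have X0 : 0 < X by rewrite invr_gt0.
have xX : x * X = 1 by rewrite mulfV // gt_eqF.
have f1 : X / 2 * Bs * eps2 <= eps / 4 * X.
  have : Bs * eps2 <= eps / 2.
    have e : Bs * eps2 + eps2 = eps / 2.
      rewrite /eps2. field. apply/eqP => h0. have : 0 < Bs + 1 by lra. lra.
    lra.
  move=> h. have -> : X / 2 * Bs * eps2 = X / 2 * (Bs * eps2) by ring.
  have -> : eps / 4 * X = X / 2 * (eps / 2) by field.
  rewrite ler_pM2l //. apply: divr_gt0 => //.
have f2 : CC * X ^+ 2 <= eps / 4 * X.
  have : 4 * (`|CC| + 1) < x * eps by rewrite -ltr_pdivrMr.
  move=> h.
  have h' : 4 * (`|CC| + 1) * X < eps.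
    have : 4 * (`|CC| + 1) * X < x * eps * X by rewrite ltr_pM2r.
    have -> : x * eps * X = eps * (x * X) by ring.
    by rewrite xX mulr1.
  have hc := ler_norm CC.
  have : CC * X ^+ 2 <= `|CC| * X ^+ 2 by rewrite ler_pM2r // exprn_gt0.
  have : 0 <= X ^+ 2 by exact: sqr_ge0.
  have : `|CC| * X ^+ 2 <= eps / 4 * X.
    have -> : `|CC| * X ^+ 2 = (`|CC| * X) * X by ring.
    rewrite ler_pM2r //. lra.
  lra.
have : 0 < eps * X by apply: mulr_gt0.
lra.
Qed.
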